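(* Let $f:\mathbb{R}^n\to\mathbb{R}^n$ be continuous, $\Gamma\in\mathbb{R}^{n\times n}$, and let $s(t)$ be a solution of $\dot s(t)=f(s(t))$. Let $L=(l_{ij})\in\mathbb{R}^{m\times m}$ be irreducible with $\mathrm{Rank}(L)=m-1$, $l_{ij}\ge 0$ for $i\ne j$ and $\sum_{j=1}^m l_{ij}=0$ for every $i$, and let $\varepsilon>0$. Consider the pinning-controlled system $$\frac{dx_1(t)}{dt}=f(x_1(t))+c\sum_{j=1}^m l_{1j}\Gamma x_j(t)-c\varepsilon(x_1(t)-s(t)),$$ $$\frac{dx_i(t)}{dt}=f(x_i(t))+c\sum_{j=1}^m l_{ij}\Gamma x_j(t),\qquad i=2,\dots,m.$$ Suppose there exist a positive definite $P\in\mathbb{R}^{n\times n}$, $\Delta\in\mathbb{R}^{n\times n}$ and $\epsilon>0$ with $$(x-y)^T P\big\{[f(x)-f(y)]-\Delta(x-y)\big\}\le -\epsilon (x-y)^T(x-y)\quad\text{for all }x,y\in\mathbb{R}^n,$$ that $\mathrm{Ran}(P\Delta)=\mathrm{Ran}(P\Gamma)$ (in particular if $\Delta=\Gamma$), and that $P\Gamma=BB^T$ for some matrix $B$ with $P\Gamma$ positive definite on $\mathrm{Ran}(P\Gamma)$. Then, if the coupling strength $c$ is large enough, $x_i(t)-s(t)\to 0$ as $t\to\infty$ for all $i=1,\dots,m$.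
   Context: $\mathrm{Ran}(M)$ is the range of $M$; ''positive definite on $\mathrm{Ran}(P\Gamma)$'' means $u^TP\Gamma u>0$ for all nonzero $u\in\mathrm{Ran}(P\Gamma)$. *)

(* Defs.v *)
From HB Require Import structures.
From mathcomp Require Import all_boot all_order all_algebra.
From mathcomp Require Import all_classical all_reals all_analysis.
Set Implicit Arguments. Unset Strict Implicit. Unset Printing Implicit Defensive.
Import Order.TTheory GRing.Theory Num.Theory.
Local Open Scope ring_scope.

Definition qform (R : realType) (n : nat) (u : 'cV[R]_n) (A : 'M[R]_n) (v : 'cV[R]_n) : R :=
  (u^T *m A *m v) 0 0.

Definition Ran (R : realType) (p q : nat) (M : 'M[R]_(p, q)) (v : 'cV[R]_p) : Prop :=
  exists u : 'cV[R]_q, v = M *m u.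

Definition posdef (R : realType) (n : nat) (P : 'M[R]_n) : Prop :=
  P^T = P /\ forall u : 'cV[R]_n, u != 0 -> 0 < qform u P u.

(* Irreducible square matrix: there is no partition of the index set into
   nonempty sets I, J with A i j = 0 for all i in I, j in J
   (equivalently, A is not permutation-similar to a block triangular matrix). *)
Definition irreducible_mx (R : realType) (m : nat) (A : 'M[R]_m) : Prop :=
  ~ exists I : {set 'I_m}, [/\ I != finset.set0, I != [set: 'I_m]%SET &
       forall i j, i \in I -> j \notin I -> A i j = 0].

(* Main.v *)
Require Import Defs.
From HB Require Import structures.
From mathcomp Require Import all_boot all_order all_algebra.
From mathcomp Require Import all_classical all_reals all_analysis.
From mathcomp Require Import ring lra zify.
Set Implicit Arguments. Unset Strict Implicit. Unset Printing Implicit Defensive.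
Import Order.TTheory GRing.Theory Num.Theory numFieldNormedType.Exports.
Local Open Scope classical_set_scope.
Local Open Scope ring_scope.
Section Cont.
Variable R : realType.
Variable T : topologicalType.
Implicit Types f g : T -> R.

Lemma cD f g : continuous f -> continuous g -> continuous (fun x => f x + g x).
Proof. by move=> cf cg x; exact: (continuousD (cf x) (cg x)). Qed.
Lemma cB f g : continuous f -> continuous g -> continuous (fun x => f x - g x).
Proof. by move=> cf cg x; exact: (continuousB (cf x) (cg x)). Qed.
Lemma cM f g : continuous f -> continuous g -> continuous (fun x => f x * g x).
Proof. by move=> cf cg x; exact: (continuousM (cf x) (cg x)). Qed.
Lemma cN f : continuous f -> continuous (fun x => - f x).
Proof. by move=> cf x; exact: (continuousN (cf x)). Qed.
Lemma cC (a : R) : continuous (fun _ : T => a).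
Proof. by move=> x; exact: cvg_cst. Qed.
Lemma cNorm f : continuous f -> continuous (fun x => `|f x|).
Proof.
move=> cf x; exact: (continuous_comp (cf x) (@norm_continuous _ R^o _)).
Qed.
Lemma cSum (I : Type) (r : seq I) (P : pred I) (F : I -> T -> R) :
  (forall i, continuous (F i)) -> continuous (fun x => \sum_(i <- r | P i) F i x).
Proof.
move=> cF; elim: r => [|i r IH].
  under eq_fun do rewrite big_nil; exact: cC.
under eq_fun do rewrite big_cons.
case: (P i); last exact: IH.
exact: cD.
Qed.
End Cont.
Section HC.
Variable R : realType.

Definition hom2 N (F : 'rV[R]_N -> R) := forall (a : R) v, F (a *: v) = a ^+ 2 * F v.

Lemma hom2_0 N (F : 'rV[R]_N -> R) : hom2 F -> F 0 = 0.
Proof. by move=> h; rewrite -(scale0r (0:'rV[R]_N)) h expr2 !mul0r. Qed.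

Lemma sphere_compact N : compact [set v : 'rV[R]_N | `|v| = 1].
Proof.
apply: bounded_closed_compact.
  rewrite /= /bounded_near; near=> M => v /= ->; near: M.
  by apply: nbhs_pinfty_ge.
have -> : [set v : 'rV[R]_N | `|v| = 1] = (fun v : 'rV[R]_N => `|v|) @^-1` [set 1].
  by [].
apply: closed_comp; last exact: closed_eq.
by move=> x _; exact: norm_continuous.
Unshelve. all: by end_near.
Qed.

Lemma hom_compare N (phi psi : 'rV[R]_N -> R) :
  continuous phi -> continuous psi -> hom2 phi -> hom2 psi ->
  (forall v, v != 0 -> 0 < phi v) ->
  exists K, 0 < K /\ forall v, psi v <= K * phi v.
Proof.
move=> cphi cpsi hphi hpsi pos.
set S := [set v : 'rV[R]_N | `|v| = 1].
have [S0|/set0P [u0 Su0]] := eqVneq S set0.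
  exists 1; split => // v; have [->|vn0] := eqVneq v 0.
    by rewrite (hom2_0 hphi) (hom2_0 hpsi) mulr0.
  have : S (`|v|^-1 *: v).
    by rewrite /S /= normrZ normrV ?unitfE ?normr_eq0 // normr_id mulVf // normr_eq0.
  by rewrite S0.
have SN : S !=set0 by exists u0.
have [c cS cmin] := compact_EVT_min SN (@sphere_compact N)
   (continuous_subspaceT (fun x => cphi x)).
have [d dS dmax] := compact_EVT_max SN (@sphere_compact N)
   (continuous_subspaceT (fun x => cpsi x)).
have c0 : c != 0.
  by apply/eqP => c0; move: cS; rewrite inE /S /= c0 normr0 => /esym/eqP; rewrite oner_eq0.
have pc := pos c c0.
exists (Num.max (psi d) 0 / phi c + 1); split.
  by rewrite ltr_pwDr // divr_ge0 // ?le_max ?lexx ?orbT // ltW.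
move=> v; have [->|vn0] := eqVneq v 0.
  by rewrite (hom2_0 hphi) (hom2_0 hpsi) mulr0.
have nv : 0 < `|v| by rewrite normr_gt0.
set u := `|v|^-1 *: v.
have uS : u \in S.
  by rewrite inE /S /= normrZ normrV ?unitfE ?normr_eq0 // normr_id mulVf // normr_eq0.
have vu : v = `|v| *: u by rewrite /u scalerA mulfV ?scale1r // normr_eq0.
rewrite vu hphi hpsi.
have h1 := dmax _ uS; have h2 := cmin _ uS.
have pu : 0 < phi u by apply: lt_le_trans h2.
set a := `|v| ^+ 2.
have a0 : 0 < a by rewrite exprn_gt0.
set M := Num.max (psi d) 0.
have hM : psi u <= M by rewrite le_max h1.
have M0 : 0 <= M by rewrite le_max lexx orbT.
have : psi u <= (M / phi c + 1) * phi u.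
  rewrite mulrDl mul1r.
  have : M <= M / phi c * phi u.
    by rewrite -mulrA ler_peMr // ler_pdivlMl // mulr1.
  lra.
move=> h; rewrite mulrCA; apply: ler_wpM2l => //; exact: ltW.
Qed.
End HC.
Section GL.
Variable R : realType.

Lemma GL N (A B Nf : 'rV[R]_N -> R) :
  continuous A -> continuous B -> continuous Nf ->
  hom2 A -> hom2 B -> hom2 Nf ->
  (forall v, 0 <= B v) -> (forall v, v != 0 -> 0 < Nf v) ->
  (forall v, v != 0 -> B v = 0 -> A v < 0) ->
  exists c0 d, 0 < d /\ forall c, c0 <= c -> forall v, A v - c * B v <= - d * Nf v.
Proof.
move=> ccA ccB ccN hA hB hN B0 N0 AB.
pose phi v := B v + (`|A v| - A v) / 2.
have cphi : continuous phi.
  apply: cD => //; apply: cM; last exact: cC.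
  by apply: cB => //; apply: cNorm.
have hphi : hom2 phi.
  move=> a v; rewrite /phi hA hB normrM.
  rewrite [`|a ^+ 2|]ger0_norm ?sqr_ge0 //; ring.
have ppos : forall v, v != 0 -> 0 < phi v.
  move=> v vn0; rewrite /phi.
  have h := B0 v; have h' := ler_norm (A v).
  have [Bz|Bp] := eqVneq (B v) 0.
    have An := AB v vn0 Bz; rewrite Bz ltr0_norm //; lra.
  have : 0 < B v by rewrite lt_neqAle eq_sym Bp h.
  lra.
have [K1 [K1p HK1]] := hom_compare cphi ccN hphi hN ppos.
have [K2 [K2p HK2]] := hom_compare ccN ccA hN hA N0.
have phi0 : forall v, 0 <= phi v.
  move=> v; rewrite /phi; have := B0 v; have := ler_norm (A v); lra.
have Nf0 : forall v, 0 <= Nf v.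
  by move=> v; have [->|/N0/ltW//] := eqVneq v 0; rewrite (hom2_0 hN).
exists (2 * K1 * K2 + 1), (K1^-1 / 2); split.
  by rewrite divr_gt0 // invr_gt0.
move=> c hc v.
have HK1' : Nf v / K1 <= phi v.
  by rewrite ler_pdivrMr // mulrC; apply: HK1.
have := HK2 v; have := B0 v; have := Nf0 v; have := ler_norm (A v).
rewrite /phi in HK1' *.
have c0 : 0 <= c.
  apply: le_trans hc; have : 0 <= K1 * K2 by rewrite mulr_ge0 // ltW.
  lra.
set a := A v; set b := B v; set nv := Nf v.
move: HK1'; set q := nv / K1.
have -> : - (K1^-1 / 2) * nv = - q / 2 by rewrite /q; field; rewrite gt_eqF.
have qdef : nv = K1 * q by rewrite /q mulrC divfK // gt_eqF.
have q0 : 0 <= q by apply: divr_ge0; [exact: Nf0|exact: ltW].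
move=> h1 h2 h3 h4 h5.
rewrite -/a -/b in h1.
have [ha|ha] := lerP 0 a.
  rewrite ger0_norm // in h1.
  have hb : q <= b by lra.
  have : c * q <= c * b by apply: ler_wpM2l.
  have : (2 * K1 * K2 + 1) * q <= c * q by apply: ler_wpM2r.
  rewrite qdef in h5.
  have : a <= K2 * K1 * q by rewrite mulrA in h5.
  nra.
rewrite ltr0_norm // in h1.
have [hq|hq] := lerP (q / 2) (- a).
  have : 0 <= c * b by apply: mulr_ge0.
  lra.
have hb : q / 2 <= b by lra.
have : c * (q / 2) <= c * b by apply: ler_wpM2l.
have : (2 * K1 * K2 + 1) * (q / 2) <= c * (q / 2) by apply: ler_wpM2r => //; lra.
rewrite qdef in h5.
have : a <= K2 * K1 * q by rewrite mulrA in h5.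
nra.
Qed.
End GL.
Section Xi.
Variable R : realType.

Lemma left_kernel_nz m (L : 'M[R]_m) : (0 < m)%N -> \rank L = (m - 1)%N ->
  exists u : 'I_m -> R, (exists j, u j != 0) /\ forall j, \sum_i u i * L i j = 0.
Proof.
move=> m0 rk.
have : kermx L != 0.
  by rewrite -mxrank_eq0 mxrank_ker rk; apply/eqP; lia.
move/eqP => Kn0.
have [[i [j Kij]]|H] := pselect (exists i j, kermx L i j != 0); last first.
  exfalso; apply: Kn0; apply/matrixP => i j; apply/eqP.
  apply/negPn/negP => Hn; apply: H; exists i; exists j; move: Hn.
  by rewrite [X in _ == X]mxE.
exists (fun k => kermx L i k); split; first by exists j.
move=> k.
have := congr1 (fun M : 'M[R]_m => M i k) (mulmx_ker L).
rewrite [X in _ = X -> _]mxE [X in X = _ -> _]mxE => H; exact: H.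
Qed.

Lemma diag_le0 m (L : 'M[R]_m) :
  (forall i j : 'I_m, i != j -> 0 <= L i j) ->
  (forall i : 'I_m, \sum_(j < m) L i j = 0) -> forall j, L j j <= 0.
Proof.
move=> off rs j.
have := rs j; rewrite (bigD1 j) //= => h.
have : 0 <= \sum_(k < m | k != j) L j k.
  by apply: sumr_ge0 => k kj; apply: off; rewrite eq_sym.
lra.
Qed.

Lemma xi_exists m (L : 'M[R]_m) : (0 < m)%N -> irreducible_mx L ->
  \rank L = (m - 1)%N ->
  (forall i j : 'I_m, i != j -> 0 <= L i j) ->
  (forall i : 'I_m, \sum_(j < m) L i j = 0) ->
  exists xi : 'I_m -> R, (forall i, 0 < xi i) /\ forall j, \sum_i xi i * L i j = 0.
Proof.
move=> m0 irr rk off rs.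
have [u [[j0 uj0] hu]] := left_kernel_nz m0 rk.
pose g j := \sum_i `|u i| * L i j.
have g0 : forall j, 0 <= g j.
  move=> j; rewrite /g (bigD1 j) //=.
  have := hu j; rewrite (bigD1 j) //= => h.
  have e : \sum_(i < m | i != j) u i * L i j = - (u j * L j j) by lra.
  have : `|\sum_(i < m | i != j) u i * L i j| <= \sum_(i < m | i != j) `|u i| * L i j.
    apply: le_trans (ler_norm_sum _ _ _) _.
    by apply: ler_sum => i ij; rewrite normrM (ger0_norm (off _ _ ij)).
  rewrite e normrN normrM (ler0_norm (diag_le0 off rs j)).
  lra.
have gs : \sum_j g j = 0.
  rewrite /g exchange_big /=.
  rewrite big1 // => i _; by rewrite -mulr_sumr rs mulr0.
have gz : forall j, g j = 0.
  move=> j; apply/eqP; move: j; apply/forallP.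
  have := psumr_eq0P (fun j _ => g0 j) gs.
  by move=> H; apply/forallP => j; apply/eqP; apply: H.
exists (fun i => `|u i|); split; last by move=> j; exact: (gz j).
move=> k; rewrite lt_neqAle normr_ge0 andbT eq_sym normr_eq0.
apply/negP => /eqP uk.
apply: irr; exists [set i | u i != 0]%SET; split.
- by apply/set0Pn; exists j0; rewrite inE.
- by apply/eqP => /setP /(_ k); rewrite !inE uk eqxx.
- move=> i j; rewrite !inE => ui; rewrite negbK => /eqP uj.
  have := gz j; rewrite /g (bigD1 i) //= => h.
  have : 0 <= \sum_(l < m | l != i) `|u l| * L l j.
    apply: sumr_ge0 => l li; have [->|lj] := eqVneq l j.
      by rewrite uj normr0 mul0r.
    by apply: mulr_ge0 => //; apply: off.
  have ij : i != j by apply/eqP => e; move: ui; rewrite e uj eqxx.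
  have : 0 <= L i j by apply: off.
  have : 0 < `|u i| by rewrite normr_gt0.
  move=> a b c; apply/eqP; rewrite eq_le b andbT.
  have : `|u i| * L i j <= 0 by lra.
  by rewrite pmulr_rle0.
Qed.
End Xi.
Section QF.
Variable R : realType.
Variable n : nat.
Implicit Types u v w : 'cV[R]_n.
Implicit Types A B : 'M[R]_n.

Lemma qformE u A v : qform u A v = \sum_b \sum_a u a 0 * A a b * v b 0.
Proof.
rewrite /qform mxE; apply: eq_bigr => b _; rewrite mxE mulr_suml.
by apply: eq_bigr => a _; rewrite mxE.
Qed.

Lemma qformDl u w A v : qform (u + w) A v = qform u A v + qform w A v.
Proof. by rewrite /qform linearD /= mulmxDl mulmxDl mxE. Qed.
Lemma qformDr u A v w : qform u A (v + w) = qform u A v + qform u A w.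
Proof. by rewrite /qform mulmxDr mxE. Qed.
Lemma qformZl a u A v : qform (a *: u) A v = a * qform u A v.
Proof. by rewrite /qform linearZ /= -!scalemxAl mxE. Qed.
Lemma qformZr a u A v : qform u A (a *: v) = a * qform u A v.
Proof. by rewrite /qform -scalemxAr mxE. Qed.
Lemma qformNl u A v : qform (- u) A v = - qform u A v.
Proof. by rewrite -scaleN1r qformZl mulN1r. Qed.
Lemma qformNr u A v : qform u A (- v) = - qform u A v.
Proof. by rewrite -scaleN1r qformZr mulN1r. Qed.
Lemma qformBl u w A v : qform (u - w) A v = qform u A v - qform w A v.
Proof. by rewrite qformDl qformNl. Qed.
Lemma qformBr u A v w : qform u A (v - w) = qform u A v - qform u A w.
Proof. by rewrite qformDr qformNr. Qed.
Lemma qform0l A v : qform 0 A v = 0.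
Proof. by rewrite -(scale0r (0:'cV[R]_n)) qformZl mul0r. Qed.
Lemma qform0r u A : qform u A 0 = 0.
Proof. by rewrite -(scale0r (0:'cV[R]_n)) qformZr mul0r. Qed.
Lemma qform_sumr (I : finType) u A (F : I -> 'cV[R]_n) :
  qform u A (\sum_i F i) = \sum_i qform u A (F i).
Proof.
rewrite /qform mulmx_sumr summxE; by [].
Qed.
Lemma qformMA u A B v : qform u (A *m B) v = qform u A (B *m v).
Proof. by rewrite /qform !mulmxA. Qed.
Lemma qform_tr u A v : qform u A v = qform v A^T u.
Proof.
rewrite /qform; have -> : v^T *m A^T *m u = (u^T *m A *m v)^T.
  by rewrite !trmx_mul trmxK mulmxA.
by rewrite [RHS]mxE.
Qed.
Lemma qform_sym u A v : A^T = A -> qform u A v = qform v A u.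
Proof. by move=> h; rewrite qform_tr h. Qed.
Lemma qform_gram k u (B : 'M[R]_(n, k)) :
  qform u (B *m B^T) u = \sum_l ((B^T *m u) l 0) ^+ 2.
Proof.
rewrite /qform.
have -> : u^T *m (B *m B^T) *m u = (B^T *m u)^T *m (B^T *m u).
  by rewrite trmx_mul trmxK !mulmxA.
rewrite [LHS]mxE; apply: eq_bigr => l _.
by rewrite expr2 [X in X * _]mxE.
Qed.
Lemma qform_gram_ge0 k u (B : 'M[R]_(n, k)) : 0 <= qform u (B *m B^T) u.
Proof. by rewrite qform_gram sumr_ge0 // => l _; rewrite sqr_ge0. Qed.
Lemma qform1 u : qform u 1%:M u = \sum_a (u a 0) ^+ 2.
Proof. by rewrite /qform mulmx1 mxE; apply: eq_bigr => a _; rewrite mxE expr2. Qed.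
End QF.
Section Der.
Variable R : realType.
Implicit Types f g : R -> R.

Lemma dD f g (t df dg : R) : is_derive t 1 f df -> is_derive t 1 g dg ->
  is_derive t 1 (fun x => f x + g x) (df + dg).
Proof. move=> h1 h2; exact: (is_deriveD h1 h2). Qed.
Lemma dM f g (t df dg : R) : is_derive t 1 f df -> is_derive t 1 g dg ->
  is_derive t 1 (fun x => f x * g x) (df * g t + f t * dg).
Proof.
move=> h1 h2; have H := is_deriveM h1 h2.
refine (is_derive_eq H _).
by rewrite /GRing.scale /= addrC mulrC.
Qed.
Lemma dC (a t : R) : is_derive t 1 (fun _ : R => a) 0.
Proof. exact: is_derive_cst. Qed.
Lemma dSum (I : Type) (r : seq I) (P : pred I) (F : I -> R -> R) (dF : I -> R) (t : R) :
  (forall i, is_derive t 1 (F i) (dF i)) ->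
  is_derive t 1 (fun x => \sum_(i <- r | P i) F i x) (\sum_(i <- r | P i) dF i).
Proof.
move=> hF; elim: r => [|i r IH].
  rewrite big_nil; under eq_fun do rewrite big_nil; exact: dC.
rewrite big_cons; under eq_fun do rewrite big_cons.
case: (P i); last exact: IH.
exact: dD.
Qed.

Lemma derive_entry p q (X : R -> 'M[R]_(p, q)) (t : R) D a b :
  is_derive t 1 X D -> is_derive t 1 (fun t => X t a b) (D a b).
Proof.
move=> h.
have dX : derivable X t 1 by exact: ex_derive.
have := derive_mx dX; rewrite derive_val => ->; rewrite mxE.
apply: derivableP; exact: ((derivable_mxP X t 1).1 dX a b).
Qed.

Lemma is_derive_qform n (X Y : R -> 'cV[R]_n) (A : 'M[R]_n) (t : R) dX dY :
  is_derive t 1 X dX -> is_derive t 1 Y dY ->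
  is_derive t 1 (fun t => qform (X t) A (Y t)) (qform dX A (Y t) + qform (X t) A dY).
Proof.
move=> hX hY.
under eq_fun do rewrite qformE.
apply: is_derive_eq.
  apply: dSum => b; apply: dSum => a.
  apply: dM; last exact: (derive_entry b 0 hY).
  apply: dM; first exact: (derive_entry a 0 hX).
  try exact: dC.
rewrite /= !qformE -big_split /=; apply: eq_bigr => b _.
rewrite -big_split /=; apply: eq_bigr => a _.
ring.
Qed.
End Der.
Section Decay.
Variable R : realType.

Lemma dExp (a t : R) : is_derive t 1 (fun x => expR (a * x)) (expR (a * t) * a).
Proof.
have h1 : is_derive t 1 (fun x : R => a * x) a.
  refine (is_derive_eq (dM (dC a t) (@is_derive_id _ _ t 1)) _).
  by rewrite mul0r add0r mulr1.
exact: (is_derive1_comp (is_derive_expR (a * t)) h1).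
Qed.

Lemma decay (V : R -> R) (al : R) : 0 < al ->
  (forall t : R, 0 < t -> exists dv : R, is_derive t 1 V dv /\ dv <= - al * V t) ->
  (forall t, 0 <= V t) -> V t @[t --> +oo] --> 0.
Proof.
move=> al0 hd V0.
pose W t := V t * expR (al * t).
have dW : forall t : R, 0 < t -> exists dw : R, is_derive t 1 W dw /\ dw <= 0.
  move=> t t0; have [dv [hv hle]] := hd t t0.
  eexists; split; first exact: (dM hv (dExp al t)).
  have e0 := expR_gt0 (al * t).
  have : dv * expR (al * t) <= - al * V t * expR (al * t) by rewrite ler_pM2r.
  nra.
have Wle : forall y, 1 <= y -> W y <= W 1.
  move=> y y1; apply: (@ler0_derive1_nincry _ W 1) => //.
  - move=> x; rewrite in_itv /= andbT => x1.
    have [dw [hw _]] := dW x (lt_trans ltr01 x1); exact: ex_derive.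
  - move=> x; rewrite in_itv /= andbT => x1.
    have [dw [hw hw0]] := dW x (lt_trans ltr01 x1).
    by rewrite derive1E derive_val.
  - apply: derivable_within_continuous => x; rewrite in_itv /= andbT => x1.
    have [dw [hw _]] := dW x (lt_le_trans ltr01 x1); exact: ex_derive.
apply: (@squeeze_cvgr _ _ _ _ (fun _ => 0) (fun t => W 1 * expR (- (al * t)))).
- near=> t; rewrite V0 /=.
  have t1 : 1 <= t by near: t; apply: nbhs_pinfty_ge; exact: num_real.
  have := Wle t t1; rewrite /W => h.
  rewrite expRN ler_pdivlMr ?expR_gt0 //.
- exact: cvg_cst.
- rewrite -[X in _ --> X](mulr0 (W 1)); apply: cvgMr.
  apply/cvgrPdist_le => e e0; near=> x.
  rewrite sub0r normrN ger0_norm; last exact: expR_ge0.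
  rewrite expRN -[leRHS]invrK lef_pV2 ?posrE ?expR_gt0 ?invr_gt0//.
  rewrite (le_trans _ (expR_ge1Dx _))//.
  have hx : e^-1 / al <= x by near: x; apply: nbhs_pinfty_ge; exact: num_real.
  rewrite ler_pdivrMr // in hx; nra.
Unshelve. all: by end_near.
Qed.
End Decay.
Section Forms.
Variables (R : realType) (n m : nat) (xi : 'I_m -> R) (L : 'M[R]_m)
  (P PD G : 'M[R]_n) (eps ep : R) (i0 : 'I_m).

Definition NE (E : 'I_m -> 'cV[R]_n) := \sum_i qform (E i) 1%:M (E i).
Definition VE (E : 'I_m -> 'cV[R]_n) := \sum_i xi i * qform (E i) P (E i).
Definition AE (E : 'I_m -> 'cV[R]_n) :=
  \sum_i xi i * (qform (E i) PD (E i) - eps * qform (E i) 1%:M (E i)).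
Definition BE (E : 'I_m -> 'cV[R]_n) :=
  - (\sum_i \sum_j xi i * L i j * qform (E i) G (E j))
  + ep * xi i0 * qform (E i0) P (E i0).

Definition unpack (v : 'rV[R]_(m * n)) (i : 'I_m) : 'cV[R]_n :=
  \col_a v 0 (mxvec_index i a).
Definition pack (E : 'I_m -> 'cV[R]_n) : 'rV[R]_(m * n) :=
  mxvec (\matrix_(i, a) E i a 0).

Lemma unpackK E : unpack (pack E) = E.
Proof.
apply: boolp.funext => i; apply/matrixP => a b.
by rewrite !mxE mxvecE mxE (ord1 b).
Qed.

Lemma unpackZ (a : R) v i : unpack (a *: v) i = a *: unpack v i.
Proof. by apply/matrixP => b c; rewrite !mxE. Qed.

Lemma unpack_nz v : v != 0 -> exists i, unpack v i != 0.
Proof.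
move=> vn0.
have : vec_mx v != 0 by rewrite vec_mx_eq0.
move=> h.
have [[i [a H]]|H] := pselect (exists i a, vec_mx v i a != 0); last first.
  exfalso; move/eqP: h; apply; apply/matrixP => i a; apply/eqP.
  apply/negPn/negP => Hn; apply: H; exists i; exists a; move: Hn.
  by rewrite [X in _ == X]mxE.
exists i; apply/eqP => /matrixP /(_ a 0); rewrite !mxE => e.
by move: H; rewrite mxE e eqxx.
Qed.

Lemma qformZZ (a : R) (u w : 'cV[R]_n) (M : 'M[R]_n) : qform (a *: u) M (a *: w) = a ^+ 2 * qform u M w.
Proof. by rewrite qformZl qformZr mulrA expr2. Qed.

Lemma cont_qf i j (M : 'M[R]_n) :
  continuous (fun v : 'rV[R]_(m * n) => qform (unpack v i) M (unpack v j)).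
Proof.
under eq_fun do rewrite qformE.
apply: cSum => b; apply: cSum => a.
apply: cM; first apply: cM.
- under eq_fun do rewrite mxE; exact: coord_continuous.
- exact: cC.
- under eq_fun do rewrite mxE; exact: coord_continuous.
Qed.


Lemma cont_NE : continuous (fun v => NE (unpack v)).
Proof. by rewrite /NE; apply: cSum => i; exact: cont_qf. Qed.
Lemma cont_VE : continuous (fun v => VE (unpack v)).
Proof. by rewrite /VE; apply: cSum => i; apply: cM; [exact: cC|exact: cont_qf]. Qed.
Lemma cont_AE : continuous (fun v => AE (unpack v)).
Proof.
rewrite /AE; apply: cSum => i; apply: cM; first exact: cC.
by apply: cB; [exact: cont_qf| apply: cM; [exact: cC|exact: cont_qf]].
Qed.
Lemma cont_BE : continuous (fun v => BE (unpack v)).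
Proof.
rewrite /BE; apply: cD.
  apply: cN; apply: cSum => i; apply: cSum => j.
  by apply: cM; [exact: cC|exact: cont_qf].
by apply: cM; [exact: cC|exact: cont_qf].
Qed.

Lemma hom_NE : hom2 (fun v => NE (unpack v)).
Proof.
move=> a v; rewrite /NE mulr_sumr; apply: eq_bigr => i _.
by rewrite !unpackZ qformZZ.
Qed.
Lemma hom_VE : hom2 (fun v => VE (unpack v)).
Proof.
move=> a v; rewrite /VE mulr_sumr; apply: eq_bigr => i _.
by rewrite !unpackZ qformZZ mulrCA.
Qed.
Lemma hom_AE : hom2 (fun v => AE (unpack v)).
Proof.
move=> a v; rewrite /AE mulr_sumr; apply: eq_bigr => i _.
rewrite !unpackZ !qformZZ; ring.
Qed.
Lemma hom_BE : hom2 (fun v => BE (unpack v)).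
Proof.
move=> a v; rewrite /BE mulrDr mulrN mulr_sumr; congr (- _ + _).
  apply: eq_bigr => i _; rewrite mulr_sumr; apply: eq_bigr => j _.
  rewrite !unpackZ qformZZ; ring.
rewrite !unpackZ qformZZ; ring.
Qed.
End Forms.
Section Coupling.
Variables (R : realType) (n m : nat) (xi : 'I_m -> R) (L : 'M[R]_m) (G : 'M[R]_n).
Hypothesis Gsym : G^T = G.
Hypothesis rs : forall i : 'I_m, \sum_(j < m) L i j = 0.
Hypothesis cs : forall j : 'I_m, \sum_(i < m) xi i * L i j = 0.

Lemma coupling_id (E : 'I_m -> 'cV[R]_n) :
  \sum_i \sum_j xi i * L i j * qform (E i) G (E j) =
  - (\sum_i \sum_j xi i * L i j * qform (E i - E j) G (E i - E j)) / 2.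
Proof.
have h : \sum_i \sum_j xi i * L i j * qform (E i - E j) G (E i - E j) =
   \sum_i \sum_j (xi i * L i j * qform (E i) G (E i)
      + xi i * L i j * qform (E j) G (E j)
      - 2 * (xi i * L i j * qform (E i) G (E j))).
  apply: eq_bigr => i _; apply: eq_bigr => j _.
  rewrite !qformBl !qformBr (qform_sym (E j) (E i) Gsym); ring.
have p1 : \sum_i \sum_j xi i * L i j * qform (E i) G (E i) = 0.
  rewrite big1 // => i _.
  under eq_bigr do rewrite mulrAC.
  by rewrite -mulr_sumr rs mulr0.
have p2 : \sum_i \sum_j xi i * L i j * qform (E j) G (E j) = 0.
  rewrite exchange_big big1 //= => j _.
  by rewrite -mulr_suml cs mul0r.
have lin : forall a b c : 'I_m -> 'I_m -> R,
   \sum_i \sum_j (a i j + b i j - 2 * c i j) =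
   \sum_i \sum_j a i j + \sum_i \sum_j b i j - 2 * \sum_i \sum_j c i j.
  move=> a b c; rewrite mulr_sumr -big_split -sumrB /=; apply: eq_bigr => i _.
  by rewrite mulr_sumr -big_split -sumrB.
rewrite h lin p1 p2 add0r; field; by [].
Qed.

Lemma coupling_nonneg k (B : 'M[R]_(n, k)) (E : 'I_m -> 'cV[R]_n) :
  G = B *m B^T -> (forall i, 0 < xi i) ->
  (forall i j : 'I_m, i != j -> 0 <= L i j) ->
  0 <= \sum_i \sum_j xi i * L i j * qform (E i - E j) G (E i - E j).
Proof.
move=> GB xp off; apply: sumr_ge0 => i _; apply: sumr_ge0 => j _.
have [->|ij] := eqVneq i j; first by rewrite subrr qform0l mulr0.
apply: mulr_ge0; first by apply: mulr_ge0; [exact: ltW|exact: off].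
by rewrite GB qform_gram_ge0.
Qed.
End Coupling.
Section Aux.
Variables (R : realType) (n : nat).

Lemma qform1_gt0 (u : 'cV[R]_n) : u != 0 -> 0 < qform u 1%:M u.
Proof.
move=> un0; rewrite qform1.
have [a ha] : exists a, u a 0 != 0.
  have [[a [b H]]|H] := pselect (exists a b, u a b != 0); last first.
    exfalso; move/eqP: un0; apply; apply/matrixP => a b; apply/eqP.
    apply/negPn/negP => Hn; apply: H; exists a; exists b; move: Hn.
    by rewrite [X in _ == X]mxE.
  by exists a; rewrite (ord1 b) in H.
rewrite (bigD1 a) //=; apply: ltr_pwDl.
  by rewrite exprn_even_gt0 //.
by apply: sumr_ge0 => i _; exact: sqr_ge0.
Qed.

Lemma qform1_ge0 (u : 'cV[R]_n) : 0 <= qform u 1%:M u.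
Proof. by rewrite qform1 sumr_ge0 // => i _; exact: sqr_ge0. Qed.

Lemma gram_eq0 k (B : 'M[R]_(n, k)) (u : 'cV[R]_n) :
  qform u (B *m B^T) u = 0 -> B^T *m u = 0.
Proof.
rewrite qform_gram => h.
have := psumr_eq0P (fun l _ => sqr_ge0 ((B^T *m u) l 0)) h => H.
apply/matrixP => l b; rewrite (ord1 b) [RHS]mxE.
by apply/eqP; rewrite -sqrf_eq0; apply/eqP; apply: H.
Qed.

Lemma posdef_ge0 (P : 'M[R]_n) u : posdef P -> 0 <= qform u P u.
Proof.
case=> _ Pp; have [->|un0] := eqVneq u 0; first by rewrite qform0l.
exact/ltW/Pp.
Qed.

Lemma posdef_eq0 (P : 'M[R]_n) u : posdef P -> qform u P u = 0 -> u = 0.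
Proof.
case=> _ Pp h; apply/eqP; apply/negPn/negP => un0.
by have := Pp u un0; rewrite h ltxx.
Qed.
End Aux.

Section Key.
Variables (R : realType) (n m k : nat) (xi : 'I_m -> R) (L : 'M[R]_m)
  (P PD G : 'M[R]_n) (B : 'M[R]_(n, k)) (eps ep : R) (i0 : 'I_m).
Hypothesis GB : G = B *m B^T.
Hypothesis Ppd : posdef P.
Hypothesis ran : forall u : 'cV[R]_n, exists w : 'cV[R]_n, PD *m u = G *m w.
Hypothesis xip : forall i, 0 < xi i.
Hypothesis rs : forall i : 'I_m, \sum_(j < m) L i j = 0.
Hypothesis cs : forall j : 'I_m, \sum_(i < m) xi i * L i j = 0.
Hypothesis off : forall i j : 'I_m, i != j -> 0 <= L i j.
Hypothesis irr : irreducible_mx L.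
Hypothesis ep0 : 0 < ep.
Hypothesis eps0 : 0 < eps.

Let Gsym : G^T = G.
Proof. by rewrite GB trmx_mul trmxK. Qed.

Let T (E : 'I_m -> 'cV[R]_n) :=
  \sum_i \sum_j xi i * L i j * qform (E i - E j) G (E i - E j).

Lemma BE_eq E : BE xi L P G ep i0 E = T E / 2 + ep * xi i0 * qform (E i0) P (E i0).
Proof. by rewrite /BE (coupling_id Gsym rs cs) /T; field. Qed.

Lemma BE_ge0 E : 0 <= BE xi L P G ep i0 E.
Proof.
rewrite BE_eq; apply: addr_ge0.
  by apply: divr_ge0 => //; apply: (coupling_nonneg _ GB xip off).
by apply: mulr_ge0; [apply: mulr_ge0; apply: ltW|apply: posdef_ge0].
Qed.

Lemma BE_zero_AE E : (exists i, E i != 0) -> BE xi L P G ep i0 E = 0 ->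
  AE xi PD eps E < 0.
Proof.
move=> [i1 Ei1] hB.
have T0 : 0 <= T E by apply: (coupling_nonneg _ GB xip off).
have q0 : 0 <= ep * xi i0 * qform (E i0) P (E i0).
  by apply: mulr_ge0; [apply: mulr_ge0; apply: ltW|apply: posdef_ge0].
move: hB; rewrite BE_eq => hB.
have TE : T E = 0 by lra.
have qE : ep * xi i0 * qform (E i0) P (E i0) = 0 by lra.
have E0 : E i0 = 0.
  apply: (posdef_eq0 Ppd); apply/eqP; move/eqP: qE.
  by rewrite !mulf_eq0 (gt_eqF ep0) (gt_eqF (xip i0)) /=.
have term0 : forall i j, xi i * L i j * qform (E i - E j) G (E i - E j) = 0.
  move=> i j.
  have tge : forall i, 0 <= \sum_j xi i * L i j * qform (E i - E j) G (E i - E j).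
    move=> i'; apply: sumr_ge0 => j' _.
    have [->|ij] := eqVneq i' j'; first by rewrite subrr qform0l mulr0.
    apply: mulr_ge0; first by apply: mulr_ge0; [exact: ltW|exact: off].
    by rewrite GB qform_gram_ge0.
  have := psumr_eq0P (fun i _ => tge i) TE (i := i) isT => hi.
  have tge2 : forall j', 0 <= xi i * L i j' * qform (E i - E j') G (E i - E j').
    move=> j'; have [->|ij] := eqVneq i j'; first by rewrite subrr qform0l mulr0.
    apply: mulr_ge0; first by apply: mulr_ge0; [exact: ltW|exact: off].
    by rewrite GB qform_gram_ge0.
  exact: (psumr_eq0P (fun j _ => tge2 j) hi (i := j) isT).
have link : forall i j, L i j != 0 -> B^T *m E i = B^T *m E j.
  move=> i j Lij; apply/eqP; rewrite -subr_eq0 -mulmxBr; apply/eqP.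
  apply: gram_eq0; rewrite -GB.
  have := term0 i j; move/eqP; rewrite !mulf_eq0 (gt_eqF (xip i)) (negbTE Lij) /=.
  by move/eqP.
have allB : forall i, B^T *m E i = 0.
  move=> i.
  have [[i2 Hi2]|Hall] := pselect (exists i2, B^T *m E i2 != B^T *m E i0); last first.
    have := Hall; move=> H; apply/eqP; apply/negPn/negP => Hn.
    by apply: H; exists i; rewrite E0 mulmx0.
  exfalso; apply: irr; exists [set i | B^T *m E i == B^T *m E i0]%SET; split.
  - by apply/set0Pn; exists i0; rewrite inE.
  - by apply/eqP => /setP /(_ i2); rewrite !inE (negbTE Hi2).
  - move=> a b; rewrite !inE => /eqP ha hb.
    apply/eqP; apply/negPn/negP => Lab.
    by move: hb; rewrite -(link a b Lab) ha eqxx.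
have zPD : forall i, qform (E i) PD (E i) = 0.
  move=> i; have [w hw] := ran (E i).
  rewrite -[PD]mul1mx qformMA hw -qformMA mul1mx.
  rewrite (qform_sym _ _ Gsym) -[G]mul1mx qformMA.
  by rewrite GB -mulmxA allB mulmx0 qform0r.
rewrite /AE.
under eq_bigr do rewrite zPD sub0r mulrN.
rewrite sumrN oppr_lt0 (bigD1 i1) //=.
apply: ltr_pwDl.
  apply: mulr_gt0 => //; apply: mulr_gt0 => //; exact: qform1_gt0.
apply: sumr_ge0 => i _; apply: mulr_ge0; first exact: ltW.
by apply: mulr_ge0; [exact: ltW|exact: qform1_ge0].
Qed.
End Key.
Lemma dBv (R : realType) p q (X Y : R -> 'M[R]_(p, q)) (t : R) dX dY :
  is_derive t 1 X dX -> is_derive t 1 Y dY ->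
  is_derive t 1 (fun t => X t - Y t) (dX - dY).
Proof. move=> h1 h2; have H := is_deriveB h1 h2; exact: H. Qed.

Lemma entry_sq_le (R : realType) n (u : 'cV[R]_n) a : (u a 0) ^+ 2 <= qform u 1%:M u.
Proof.
rewrite qform1 (bigD1 a) //= lerDl; apply: sumr_ge0 => i _; exact: sqr_ge0.
Qed.

Lemma norm_le_of (R : realType) n (u : 'cV[R]_n) (e : R) : 0 < e ->
  qform u 1%:M u <= e ^+ 2 -> `|u| <= e.
Proof.
move=> e0 h.
rewrite [leLHS]/Num.Def.normr/= mx_normrE (bigmax_le _ (ltW e0))//= => -[a b] _.
rewrite (ord1 b) /=.
have := le_trans (entry_sq_le u a) h; set x := u a 0 => hh.
rewrite ler_norml; apply/andP; split; nra.
Qed.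
Unset Implicit Arguments.
Set Strict Implicit.
Theorem proposition3 (R : realType) (n m : nat) (hm : (0 < m)%N)
  (f : 'cV[R]_n -> 'cV[R]_n) (Gamma : 'M[R]_n) (s : R -> 'cV[R]_n)
  (L : 'M[R]_m) (eps_pin : R) (P Delta : 'M[R]_n) (eps : R) :
  continuous f ->
  (forall t : R, 0 < t -> is_derive t (1:R) s (f (s t))) ->
  irreducible_mx L ->
  \rank L = (m - 1)%N ->
  (forall i j : 'I_m, i != j -> 0 <= L i j) ->
  (forall i : 'I_m, \sum_(j < m) L i j = 0) ->
  0 < eps_pin ->
  posdef P ->
  0 < eps ->
  (forall x y : 'cV[R]_n,
      qform (x - y) P ((f x - f y) - Delta *m (x - y))
      <= - eps * qform (x - y) 1%:M (x - y)) ->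
  (forall v : 'cV[R]_n, Ran (P *m Delta) v <-> Ran (P *m Gamma) v) ->
  (exists (k : nat) (B : 'M[R]_(n, k)), P *m Gamma = B *m B^T) ->
  (forall u : 'cV[R]_n, Ran (P *m Gamma) u -> u != 0 ->
      0 < qform u (P *m Gamma) u) ->
  exists c0 : R, forall c : R, c0 <= c ->
    forall x : 'I_m -> R -> 'cV[R]_n,
      (forall (i : 'I_m) (t : R), 0 < t ->
         is_derive t (1:R) (x i)
           (f (x i t) + c *: \sum_(j < m) (L i j *: (Gamma *m x j t))
            - (if i == Ordinal hm then (c * eps_pin) *: (x i t - s t) else 0))) ->
      forall i : 'I_m, (x i t - s t) @[t --> +oo] --> (0 : 'cV[R]_n).
Proof.
move=> fc sd irr rk off rs ep0 Ppd eps0 quad ranH [k [B GB]] _.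
set G := P *m Gamma in GB *.
set PD := P *m Delta in ranH *.
have ran : forall u : 'cV[R]_n, exists w : 'cV[R]_n, PD *m u = G *m w.
  move=> u; have [w hw] := (ranH (PD *m u)).1 (ex_intro _ u erefl).
  by exists w.
have [xi [xip cs]] := xi_exists hm irr rk off rs.
set i0 := Ordinal hm.
have Psym : P^T = P by case: Ppd.
have Nf0 : forall v : 'rV[R]_(m * n), v != 0 -> 0 < NE (unpack v).
  move=> v /unpack_nz [i hi]; rewrite /NE (bigD1 i) //=.
  apply: ltr_pwDl; first exact: qform1_gt0.
  by apply: sumr_ge0 => j _; exact: qform1_ge0.
have Vf0 : forall v : 'rV[R]_(m * n), v != 0 -> 0 < VE xi P (unpack v).
  move=> v /unpack_nz [i hi]; rewrite /VE (bigD1 i) //=.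
  apply: ltr_pwDl; first by apply: mulr_gt0 => //; case: Ppd => _; apply.
  by apply: sumr_ge0 => j _; apply: mulr_ge0; [exact: ltW|exact: posdef_ge0].
have [c0 [d [d0 Hc]]] := GL (@cont_AE R n m xi PD eps) (@cont_BE R n m xi L P G eps_pin i0)
   (@cont_NE R n m) (@hom_AE R n m xi PD eps) (@hom_BE R n m xi L P G eps_pin i0)
   (@hom_NE R n m) (fun v => BE_ge0 i0 GB Ppd xip rs cs off ep0 (unpack v)) Nf0
   (fun v vn0 hB => BE_zero_AE GB Ppd ran xip rs cs off irr ep0 eps0 (unpack_nz vn0) hB).
have [K [K0 HK]] := hom_compare (@cont_NE R n m) (@cont_VE R n m xi P)
   (@hom_NE R n m) (@hom_VE R n m xi P) Nf0.
have [K' [K'0 HK']] := hom_compare (@cont_VE R n m xi P) (@cont_NE R n m)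
   (@hom_VE R n m xi P) (@hom_NE R n m) Vf0.
exists c0 => c hc x hx i.
pose E t : 'I_m -> 'cV[R]_n := fun j => x j t - s t.
pose V t := VE xi P (E t).
pose D t j := (f (x j t) + c *: \sum_(l < m) (L j l *: (Gamma *m x l t))
            - (if j == i0 then (c * eps_pin) *: (x j t - s t) else 0)) - f (s t).
have key : forall t, \sum_j xi j * qform (E t j) P (D t j) <=
    AE xi PD eps (E t) - c * BE xi L P G eps_pin i0 (E t).
  move=> t.
  have term : forall j, xi j * qform (E t j) P (D t j) <=
     xi j * (qform (E t j) PD (E t j) - eps * qform (E t j) 1%:M (E t j))
     + c * (\sum_l xi j * L j l * qform (E t j) G (E t l))
     - (if j == i0 then c * eps_pin * xi j * qform (E t j) P (E t j) else 0).
    move=> j.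
    have hq := quad (x j t) (s t).
    rewrite -/(E t j) qformBr qformBr -qformMA -/PD in hq.
    have hS : qform (E t j) P (c *: \sum_(l < m) (L j l *: (Gamma *m x l t))) =
        c * \sum_l L j l * qform (E t j) G (E t l).
      rewrite qformZr qform_sumr; congr (_ * _).
      have : \sum_l L j l * qform (E t j) G (E t l) =
             \sum_l L j l * qform (E t j) G (x l t) - (\sum_l L j l) * qform (E t j) G (s t).
        rewrite mulr_suml -sumrB; apply: eq_bigr => l _.
        by rewrite /E qformBr mulrBr.
      rewrite rs mul0r subr0 => ->.
      by apply: eq_bigr => l _; rewrite qformZr -qformMA.
    have hI : qform (E t j) P (if j == i0 then (c * eps_pin) *: (x j t - s t) else 0) =
        (if j == i0 then c * eps_pin * qform (E t j) P (E t j) else 0).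
      by case: (j == i0); [rewrite qformZr | rewrite qform0r].
    rewrite /D qformBr qformBr qformDr hS hI.
    have xj0 := xip j.
    have -> : c * (\sum_l xi j * L j l * qform (E t j) G (E t l)) =
              xi j * (c * \sum_l L j l * qform (E t j) G (E t l)).
      by rewrite mulrCA; congr (_ * _); rewrite mulr_sumr; apply: eq_bigr => l _; rewrite mulrA.
    have -> : (if j == i0 then c * eps_pin * xi j * qform (E t j) P (E t j) else 0) =
              xi j * (if j == i0 then c * eps_pin * qform (E t j) P (E t j) else 0).
      by case: (j == i0); [ring | rewrite mulr0].
    rewrite -mulrDr -mulrBr; apply: ler_wpM2l; first exact: ltW.
    lra.
  apply: le_trans (ler_sum _ (fun j _ => term j)) _.
  rewrite sumrB big_split /= -mulr_sumr -big_mkcond /= big_pred1_eq.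
  rewrite /BE /AE le_eqVlt; apply/orP; left; apply/eqP.
  ring.
have al0 : 0 < 2 * d / K by apply: divr_gt0 => //; apply: mulr_gt0.
have HV : forall t : R, 0 < t -> exists dv : R, is_derive t 1 V dv /\ dv <= - (2 * d / K) * V t.
  move=> t t0.
  have de : forall j, is_derive t 1 (fun t => x j t - s t) (D t j).
    by move=> j; apply: dBv; [exact: hx | exact: sd].
  exists (\sum_j (0 * qform (E t j) P (E t j) +
      xi j * (qform (D t j) P (E t j) + qform (E t j) P (D t j)))); split.
    rewrite /V /VE /E.
    apply: (@dSum R _ _ _ (fun j t => xi j * qform (x j t - s t) P (x j t - s t))) => j.
    apply: dM; (try exact: dC); exact: (is_derive_qform _ (de j) (de j)).
  under eq_bigr => j _ do rewrite mul0r add0r (qform_sym (D t j) _ Psym).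
  have e1 : \sum_j xi j * (qform (E t j) P (D t j) + qform (E t j) P (D t j)) =
            2 * \sum_j xi j * qform (E t j) P (D t j).
    by rewrite mulr_sumr; apply: eq_bigr => j _; ring.
  rewrite e1.
  have h1 := Hc c hc (pack (E t)); rewrite unpackK in h1.
  have h2 := HK (pack (E t)); rewrite unpackK in h2.
  have h3 := key t.
  rewrite -/(V t) in h2 *.
  have : (2 * d / K) * V t <= (2 * d / K) * (K * NE (E t)).
    by apply: ler_wpM2l => //; exact: ltW.
  have -> : (2 * d / K) * (K * NE (E t)) = 2 * d * NE (E t).
    by field; rewrite gt_eqF.
  lra.
have V0 : forall t, 0 <= V t.
  move=> t; rewrite /V /VE; apply: sumr_ge0 => j _.
  by apply: mulr_ge0; [exact: ltW | exact: posdef_ge0].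
have Vc := decay al0 HV V0.
apply/cvgrPdist_le => eps' e0.
have hK' : 0 < eps' ^+ 2 / K' by apply: divr_gt0 => //; exact: exprn_gt0.
move/cvgrPdist_le : Vc => /(_ _ hK') Vev.
apply: filterS Vev => t /= Vt.
rewrite sub0r normrN norm_le_of //.
have h := HK' (pack (E t)); rewrite !unpackK -/(V t) in h.
rewrite sub0r normrN ger0_norm ?V0 // in Vt.
have : qform (E t i) 1%:M (E t i) <= NE (E t).
  rewrite /NE (bigD1 i) //= lerDl; apply: sumr_ge0 => j _; exact: qform1_ge0.
rewrite /E => hi.
apply: le_trans hi _; apply: le_trans h _.
by rewrite mulrC -ler_pdivlMr.
Qed.
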